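(* Every tOR net is sub-sound.
   Context: Petri nets and markings. A Petri net is a triple $(P,T,F)$ with $P$ a finite set of places, $T$ a finite set of transitions, $P\cap T=\emptyset$, and $F\subseteq (P\times T)\cup(T\times P)$. For a node $x$, $\bullet x=\{y\mid (y,x)\in F\}$, $x\bullet=\{y\mid (x,y)\in F\}$. A marking is a multiset over $P$ (a function $P\to\mathbb N$); sets of places are identified with bags of multiplicity one, $+,-,\le$ are pointwise, and $k.m$ is the sum of $k$ copies of $m$. Transition $t$ is enabled at $m$ iff $\bullet t\le m$, firing gives $m-\bullet t+t\bullet$, and $m\xrightarrow{*}m'$ denotes reachability by a finite (possibly empty) firing sequence. Workflow nets. A pWF net is $(P,T,F,I,O)$ with $(P,T,F)$ a Petri net, $I,O\subseteq P$ non-empty, every node reachable by a directed path from some node of $I$, and some node of $O$ reachable from every node. A tWF net is the same with $I,O$ non-empty subsets of $T$. Input nodes may have incoming edges and output nodes outgoing edges. The place-completion $\mathrm{pc}(N)$ of a tWF net $N=(P,T,F,I,O)$ is obtained by adding two fresh places $p_i,p_o$ with edges $(p_i,t)$ for all $t\in I$ and $(t,p_o)$ for all $t\in O$, and taking input set $\{p_i\}$ and output set $\{p_o\}$. OR nets. An OR net is a (possibly cyclic) WF net such that for every transition $t$: (1) either $t\in I$ and $|\bullet t|=0$, or $t\notin I$ and $|\bullet t|=1$; and (2) either $t\in O$ and $|t\bullet|=0$, or $t\notin O$ and $|t\bullet|=1$. A tOR net is an OR net that is a tWF net. Sub-soundness. A pWF net is sub-sound if for all integers $k\ge k'\ge 0$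 and every marking $m'$: if $k.I\xrightarrow{*}m'+k'.O$ then $m'\xrightarrow{*}(k-k').O$. A tWF net is sub-sound iff its place-completion is. *)

(* Defs.v *)
From mathcomp Require Import all_boot.
Set Implicit Arguments. Unset Strict Implicit. Unset Printing Implicit Defensive.

(* A Petri net (P,T,F) with P, T finite (disjoint since they are distinct
   types); the flow relation F is split as
     pre p t  <->  (p,t) \in F        post t p  <->  (t,p) \in F. *)

Section Nets.
Variables (P T : finType) (pre : P -> T -> bool) (post : T -> P -> bool).

Definition marking := {ffun P -> nat}.

Definition madd (m1 m2 : marking) : marking := [ffun p => m1 p + m2 p].
Definition kset (k : nat) (S : {set P}) : marking := [ffun p => k * (p \in S)].

Definition enabled (t : T) (m : marking) : bool := [forall p, pre p t <= m p].
Definition fire (t : T) (m : marking) : marking :=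
  [ffun p => m p - pre p t + post t p].

Inductive reach : marking -> marking -> Prop :=
| reach_refl m : reach m m
| reach_step m t m' : enabled t m -> reach (fire t m) m' -> reach m m'.

Definition flow (x y : P + T) : bool :=
  match x, y with
  | inl p, inr t => pre p t
  | inr t, inl p => post t p
  | _, _ => false
  end.

Definition tWF (I O : {set T}) : Prop :=
  [/\ I != set0, O != set0,
      (forall x : P + T, exists2 i, i \in I & connect flow (inr i) x) &
      (forall x : P + T, exists2 o, o \in O & connect flow x (inr o))].

Definition preset (t : T) : {set P} := [set p | pre p t].
Definition postset (t : T) : {set P} := [set p | post t p].

Definition isOR (I O : {set T}) : Prop :=
  forall t : T,
    ((t \in I) /\ #|preset t| = 0 \/ (t \notin I) /\ #|preset t| = 1) /\
    ((t \in O) /\ #|postset t| = 0 \/ (t \notin O) /\ #|postset t| = 1).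

Definition tOR (I O : {set T}) : Prop := tWF I O /\ isOR I O.

Definition subsound (I O : {set P}) : Prop :=
  forall (k k' : nat) (m' : marking), k' <= k ->
    reach (kset k I) (madd m' (kset k' O)) ->
    reach m' (kset (k - k') O).

End Nets.

(* Place completion: places P + bool, with p_i := inr true, p_o := inr false. *)
Section PC.
Variables (P T : finType) (pre : P -> T -> bool) (post : T -> P -> bool)
          (I O : {set T}).

Definition pc_pre (x : P + bool) (t : T) : bool :=
  match x with
  | inl p => pre p t
  | inr true => t \in I
  | inr false => false
  end.

Definition pc_post (t : T) (x : P + bool) : bool :=
  match x with
  | inl p => post t p
  | inr true => false
  | inr false => t \in O
  end.

Definition pc_I : {set P + bool} := [set inr true].
Definition pc_O : {set P + bool} := [set inr false].

(* A tWF net is sub-sound iff its place-completion is. *)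
Definition tsubsound : Prop := subsound pc_pre pc_post pc_I pc_O.
End PC.

(* Main.v *)
Require Import Defs.
From mathcomp Require Import all_boot.
From mathcomp Require Import zify.
From Stdlib Require Import Lia.
Set Implicit Arguments. Unset Strict Implicit. Unset Printing Implicit Defensive.

Definition unitm (Q : finType) (x : Q) : marking Q := [ffun y => nat_of_bool (y == x)].
Definition msize (Q : finType) (m : marking Q) : nat := \sum_y m y.

Lemma reach_trans (Q T : finType) (pr : Q -> T -> bool) (po : T -> Q -> bool) m1 m2 m3 :
  reach pr po m1 m2 -> reach pr po m2 m3 -> reach pr po m1 m3.
Proof.
elim=> [//|m t m' en _ IH] H; apply: reach_step en _; exact: IH.
Qed.

Lemma reach_mono (Q T : finType) (pr : Q -> T -> bool) (po : T -> Q -> bool) m1 m2 n :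
  reach pr po m1 m2 -> reach pr po (madd m1 n) (madd m2 n).
Proof.
elim=> [m|m t m' en _ IH]; first exact: reach_refl.
have en' : enabled pr t (madd m n).
  apply/forallP=> p; rewrite ffunE; apply: leq_trans (leq_addr _ _).
  exact: (forallP en p).
apply: reach_step en' _.
suff -> : fire pr po t (madd m n) = madd (fire pr po t m) n by [].
apply/ffunP=> p; rewrite !ffunE.
have := forallP en p; case: (pr p t); case: (po t p) => /= h;
  rewrite ?subn0 ?addn0 //; lia.
Qed.

Lemma msize_madd (Q : finType) (a b : marking Q) : msize (madd a b) = msize a + msize b.
Proof. by rewrite /msize -big_split; apply: eq_bigr => y _; rewrite ffunE. Qed.

Lemma msize_unit (Q : finType) (x : Q) : msize (unitm x) = 1.
Proof.
rewrite /msize (bigD1 x) //= ffunE eqxx big1 // => y /negbTE h.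
by rewrite ffunE h.
Qed.

Lemma kset1S (Q : finType) (x : Q) s :
  kset s.+1 [set x] = madd (kset s [set x]) (unitm x).
Proof.
apply/ffunP=> y; rewrite !ffunE in_set1; case: (y == x) => /=;
  by rewrite ?muln1 ?muln0 ?addn1 ?addn0.
Qed.

Lemma msize_kset1 (Q : finType) (x : Q) s : msize (kset s [set x]) = s.
Proof.
elim: s => [|s IH].
  by rewrite /msize big1 // => y _; rewrite ffunE.
by rewrite kset1S msize_madd IH msize_unit addn1.
Qed.

Lemma fire_sd (Q T : finType) (pr : Q -> T -> bool) (po : T -> Q -> bool) t s d m :
  (forall y, pr y t = (y == s)) -> (forall y, po t y = (y == d)) ->
  enabled pr t (madd m (unitm s)) /\
  fire pr po t (madd m (unitm s)) = madd m (unitm d).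
Proof.
move=> hs hd; split.
  apply/forallP=> y; rewrite !ffunE hs; exact: leq_addl.
apply/ffunP=> y; by rewrite !ffunE hs hd addnK.
Qed.

Lemma split_pos (Q : finType) (m : marking Q) s : msize m = s.+1 ->
  exists x m0, m = madd m0 (unitm x) /\ msize m0 = s.
Proof.
move=> hm.
case: (pickP (fun y => 0 < m y)) => [x hx|h0] /=; last first.
  move: hm; rewrite /msize big1 // => y _; move: (h0 y) => /=; by case: (m y).
exists x, [ffun y => m y - (y == x)]; split.
  apply/ffunP=> y; rewrite !ffunE; case: (eqVneq y x) => [->|] /=;
    [rewrite subnK // | rewrite subn0 addn0 //].
apply/eqP; rewrite -(eqn_add2r 1) -(msize_unit x) -msize_madd.
have -> : madd [ffun y => m y - (y == x)] (unitm x) = m; last by rewrite hm msize_unit addn1.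
apply/ffunP=> y; rewrite !ffunE; case: (eqVneq y x) => [->|] /=;
  [rewrite subnK // | rewrite subn0 addn0 //].
Qed.

Lemma reach_sd (Q T : finType) (pr : Q -> T -> bool) (po : T -> Q -> bool) t s d :
  (forall y, pr y t = (y == s)) -> (forall y, po t y = (y == d)) ->
  reach pr po (unitm s) (unitm d).
Proof.
move=> hs hd; apply: (@reach_step _ _ _ _ _ t).
  by apply/forallP=> y; rewrite !ffunE hs.
have -> : fire pr po t (unitm s) = unitm d.
  by apply/ffunP=> y; rewrite !ffunE hs hd subnn.
exact: reach_refl.
Qed.

Lemma madd_comm (Q : finType) (a b : marking Q) : madd a b = madd b a.
Proof. by apply/ffunP=> y; rewrite !ffunE addnC. Qed.

Lemma msize_reach (Q T : finType) (pr : Q -> T -> bool) (po : T -> Q -> bool) :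
  (forall t, exists s, forall y, pr y t = (y == s)) ->
  (forall t, exists d, forall y, po t y = (y == d)) ->
  forall m1 m2, reach pr po m1 m2 -> msize m1 = msize m2.
Proof.
move=> hS hD m1 m2; elim=> [//|m t m' en _ IH]; rewrite -IH.
have [s hs] := hS t; have [d hd] := hD t.
have ms : 0 < m s by have := forallP en s; rewrite hs eqxx.
have em : m = madd [ffun y => m y - (y == s)] (unitm s).
  apply/ffunP=> y; rewrite !ffunE; case: (eqVneq y s) => [->|] /=;
    [rewrite subnK // | rewrite subn0 addn0 //].
rewrite em; have [_ ->] := fire_sd [ffun y => m y - (y == s)] hs hd.
by rewrite !msize_madd !msize_unit.
Qed.

Lemma msize0 (Q : finType) (m : marking Q) : msize m = 0 -> forall y, m y = 0.
Proof.
move=> h y; move: h; rewrite /msize (bigD1 y) //=; lia.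
Qed.

Lemma src_ex (P T : finType) (pre : P -> T -> bool) (post : T -> P -> bool) (I O : {set T}) :
  isOR pre post I O -> forall t, exists s, forall y, pc_pre pre I y t = (y == s).
Proof.
move=> h t; have [[[tI c]|[tI c]] _] := h t.
  exists (inr true) => -[p|[]] //=; try by rewrite tI.
  move/eqP: c; rewrite cards_eq0 => /eqP e.
  have : p \notin preset pre t by rewrite e in_set0.
  by rewrite in_set => /negbTE ->.
have [q e] := cards1P (introT eqP c); exists (inl q) => -[p|[]] /=; try by [].
  by have := erefl (p \in preset pre t); rewrite {2}e in_set in_set1 => ->.
by apply/negbTE.
Qed.

Lemma dst_ex (P T : finType) (pre : P -> T -> bool) (post : T -> P -> bool) (I O : {set T}) :
  isOR pre post I O -> forall t, exists d, forall y, pc_post post O t y = (y == d).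
Proof.
move=> h t; have [_ [[tO c]|[tO c]]] := h t.
  exists (inr false) => -[p|[]] //=; try by rewrite tO.
  move/eqP: c; rewrite cards_eq0 => /eqP e.
  have : p \notin postset post t by rewrite e in_set0.
  by rewrite in_set => /negbTE ->.
have [q e] := cards1P (introT eqP c); exists (inl q) => -[p|[]] /=; try by [].
  by have := erefl (p \in postset post t); rewrite {2}e in_set in_set1 => ->.
by apply/negbTE.
Qed.

Lemma path_lemma (P T : finType) (pre : P -> T -> bool) (post : T -> P -> bool) (I O : {set T}) :
  isOR pre post I O -> forall o, o \in O -> forall s (u : P + T),
  path (flow pre post) u s -> last u s = inr o ->
  match u with
  | inl p => reach (pc_pre pre I) (pc_post post O) (unitm (inl p)) (unitm (inr false))
  | inr t => forall d, (forall y, pc_post post O t y = (y == d)) ->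
      reach (pc_pre pre I) (pc_post post O) (unitm d) (unitm (inr false))
  end.
Proof.
move=> hOR o oO; elim=> [|v s IH] u /=.
  move=> _ -> d hd; have := hd (inr false); rewrite /= oO => /esym/eqP <-.
  exact: reach_refl.
move=> /andP [fuv pv] hl; have := IH v pv hl.
case: u fuv => [p|t]; case: v {pv hl} => [q|t'] //= fuv.
  move=> IHv; have [s0 hs] := src_ex hOR t'; have [d hd] := dst_ex hOR t'.
  have := hs (inl p); rewrite /= fuv => /esym/eqP e; subst s0.
  exact: reach_trans (reach_sd hs hd) (IHv d hd).
move=> IHv d hd; have := hd (inl q); rewrite /= fuv => /esym/eqP <-.
exact: IHv.
Qed.

Lemma token (P T : finType) (pre : P -> T -> bool) (post : T -> P -> bool) (I O : {set T}) :
  tOR pre post I O -> forall x,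
  reach (pc_pre pre I) (pc_post post O) (unitm x) (unitm (inr false)).
Proof.
move=> [[I0 _ _ hO] hOR].
have hP : forall p, reach (pc_pre pre I) (pc_post post O) (unitm (inl p)) (unitm (inr false)).
  move=> p; have [o oO /connectP [s ps hl]] := hO (inl p).
  exact: (path_lemma hOR oO ps (esym hl)).
case=> [p|[]]; [exact: hP | | exact: reach_refl].
have [i iI] := set0Pn _ I0.
have [s0 hs] := src_ex hOR i; have [d hd] := dst_ex hOR i.
have := hs (inr true); rewrite /= iI => /esym/eqP e; subst s0.
apply: reach_trans (reach_sd hs hd) _.
case: d hd => [p|[]] hd; [exact: hP | | exact: reach_refl].
by have := hd (inr true); rewrite /= eqxx.
Qed.

Lemma reach_all (P T : finType) (pre : P -> T -> bool) (post : T -> P -> bool) (I O : {set T}) :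
  tOR pre post I O -> forall m,
  reach (pc_pre pre I) (pc_post post O) m (kset (msize m) (pc_O P)).
Proof.
move=> h m; have [s hm] : exists s, msize m = s by eexists.
rewrite hm; elim: s m hm => [|s IH] m hm.
  have -> : m = kset 0 (pc_O P) by apply/ffunP=> y; rewrite ffunE (msize0 hm).
  exact: reach_refl.
have [x [m0 [-> h0]]] := split_pos hm.
apply: reach_trans (reach_mono (unitm x) (IH m0 h0)) _.
rewrite /pc_O kset1S madd_comm [madd _ (unitm _)]madd_comm.
exact: reach_mono (token h x).
Qed.

Theorem mainTheorem17 (P T : finType) (pre : P -> T -> bool)
    (post : T -> P -> bool) (I O : {set T}) :
  tOR pre post I O -> tsubsound pre post I O.
Proof.
move=> h k k' m' hk hr.
have hS := src_ex h.2; have hD := dst_ex h.2.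
have := msize_reach hS hD hr.
rewrite msize_madd /pc_I /pc_O !msize_kset1 => e.
have -> : k - k' = msize m' by lia.
exact: reach_all h m'.
Qed.
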